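(* Let $\Phi$ be any incoherent operation (IO) acting on a single qubit $\mathcal{H}_2$ with respect to the computational basis $\{|1\rangle,|2\rangle\}$. Then $\Phi$ admits a Kraus decomposition $\Phi(\rho)=\sum_{n=1}^4 K_n\rho K_n^\dagger$ consisting of four incoherent Kraus operators of the form $$K_1=\begin{pmatrix} a_1 & b_1\\ 0&0\end{pmatrix},\quad K_2=\begin{pmatrix} 0&0\\ a_2 & b_2\end{pmatrix},\quad K_3=\begin{pmatrix} a_3 & 0\\ 0& b_3\end{pmatrix},\quad K_4=\begin{pmatrix} 0 & b_4\\ a_4& 0\end{pmatrix},$$ where $a_1,\dots,a_4\in\mathbb{R}$ and $b_1,\dots,b_4\in\mathbb{C}$ satisfy $\sum_{i=1}^4 a_i^2=\sum_{j=1}^4|b_j|^2=1$ and $a_1b_1+a_2b_2=0$.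
   Context: Fix an orthonormal basis $\{|i\rangle\}_{i=1}^d$ of $\mathcal{H}_d$. A state is incoherent if it is diagonal in this basis, i.e. of the form $\delta=\sum_{i=1}^d\delta_i|i\rangle\langle i|$ with $\delta_i\ge 0$, $\sum_i\delta_i=1$; let $\mathcal{I}$ denote the set of incoherent states. A completely positive trace-preserving map $\Phi$ is an incoherent operation (IO) if it has a Kraus representation $\Phi(\rho)=\sum_n K_n\rho K_n^\dagger$, $\sum_n K_n^\dagger K_n=I$, such that $K_n\rho K_n^\dagger/\mathrm{Tr}[K_n\rho K_n^\dagger]\in\mathcal{I}$ for all $n$ and all $\rho\in\mathcal{I}$ (whenever the trace is nonzero); such Kraus operators are called incoherent Kraus operators (equivalently, each column of each $K_n$ has at most one nonzero entry). *)

(* Defs.v *)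
(* complex numbers C := R[i] over an abstract real field R : realType
   (for R = the reals this is the usual field of complex numbers). *)
From HB Require Import structures.
From mathcomp Require Import all_boot all_order all_algebra.
From mathcomp Require Import complex reals.
Set Implicit Arguments. Unset Strict Implicit. Unset Printing Implicit Defensive.
Import Order.TTheory GRing.Theory Num.Theory.
Local Open Scope ring_scope.

Definition adj_mx (R : realType) m n (A : 'M[R[i]]_(m, n)) : 'M[R[i]]_(n, m) :=
  (map_mx Num.conj A)^T.

Definition incoherent_state (R : realType) d (rho : 'M[R[i]]_d) : Prop :=
  exists delta : 'I_d -> R[i],
    [/\ forall i, 0 <= delta i, \sum_i delta i = 1 &
        rho = \matrix_(i, j) (if i == j then delta i else 0)].

Definition incoherent_kraus (R : realType) d (K : 'M[R[i]]_d) : Prop :=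
  forall delta : 'M[R[i]]_d, incoherent_state delta ->
    let s := K *m delta *m adj_mx K in
    \tr s != 0 -> incoherent_state ((\tr s)^-1 *: s).

Definition incoherent_operation (R : realType) d
    (Phi : 'M[R[i]]_d -> 'M[R[i]]_d) : Prop :=
  exists Ks : seq 'M[R[i]]_d,
    [/\ forall K, K \in Ks -> incoherent_kraus K,
        \sum_(K <- Ks) adj_mx K *m K = 1%:M &
        forall rho, Phi rho = \sum_(K <- Ks) K *m rho *m adj_mx K].

(* the four Kraus operators of the statement; indices 0,1 stand for the
   basis vectors |1>,|2> *)
Definition K1 (R : realType) (a : R) (b : R[i]) : 'M[R[i]]_2 :=
  \matrix_(i < 2, j < 2)
    (if (i == 0 :> nat) then (if (j == 0 :> nat) then a%:C%C else b) else 0).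
Definition K2 (R : realType) (a : R) (b : R[i]) : 'M[R[i]]_2 :=
  \matrix_(i < 2, j < 2)
    (if (i == 1 :> nat) then (if (j == 0 :> nat) then a%:C%C else b) else 0).
Definition K3 (R : realType) (a : R) (b : R[i]) : 'M[R[i]]_2 :=
  \matrix_(i < 2, j < 2)
    (if (i == j) then (if (j == 0 :> nat) then a%:C%C else b) else 0).
Definition K4 (R : realType) (a : R) (b : R[i]) : 'M[R[i]]_2 :=
  \matrix_(i < 2, j < 2)
    (if (i == j) then 0 else (if (j == 0 :> nat) then a%:C%C else b)).

(* Main.v *)
Require Import Defs.
From HB Require Import structures.
From mathcomp Require Import all_boot all_order all_algebra.
From mathcomp Require Import complex reals.
From mathcomp Require Import ring lra.
Import Order.TTheory GRing.Theory Num.Theory.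
Local Open Scope ring_scope.

Section Alg.
Variable R : realType.

Definition sol (P Q P2 Q2 r C3 C4 : R) x y z w :=
  [/\ 0 <= x <= P, 0 <= y <= Q, 0 <= z <= P2, 0 <= w <= Q2 &
   [/\ x * (Q - y) = r, (P - x) * w = C3, z * y = C4 & (P2 - z) * (Q2 - w) = r]].

Lemma solC4 (P Q P2 Q2 r C3 C4 p1 q1 p2 q2 A3 B3 A4 B4 : R) :
 0<=p1 -> 0<=q1 -> 0<=p2 -> 0<=q2 -> 0<=A3 -> 0<=B3 -> 0<=A4 -> 0<=B4 -> 0<=r -> 0<=C3 -> C4 = 0 ->
 p1+A3 <= P -> q1+B4 <= Q -> p2+A4 <= P2 -> q2+B3 <= Q2 ->
 r <= p1*q1 -> r <= p2*q2 -> C3 <= A3*B3 ->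
 exists x y z w, sol P Q P2 Q2 r C3 C4 x y z w.
Proof.
move=> hp1 hq1 hp2 hq2 hA3 hB3 hA4 hB4 hr hC3 -> e1 e2 e3 e4 i1 i2 i3.
pose w := Q2 - r / P2.
have hw : B3 <= w /\ w <= Q2 /\ (P2 - 0) * (Q2 - w) = r.
  rewrite /w; have [P20|P2pos] := eqVneq P2 0.
    have -> : r = 0 by rewrite P20 in e3; nra.
    rewrite P20 !mul0r subr0; split; [lra|split; lra].
  have P2p : 0 < P2 by rewrite lt0r P2pos /=; lra.
  have h1 : r / P2 <= q2.
    by rewrite ler_pdivrMr //; nra.
  have h0 : 0 <= r / P2 by apply: divr_ge0; lra.
  split; [lra|split; [lra|]]. by rewrite subr0 opprB addrC subrK mulrC divfK.
case: hw => hw1 [hw2 hw3].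
pose x := P - C3 / w.
have hx : p1 <= x /\ x <= P /\ (P - x) * w = C3.
  rewrite /x; have [w0|wpos] := eqVneq w 0.
    have -> : C3 = 0 by rewrite w0 in hw1; nra.
    rewrite w0 !mul0r subr0 mulr0; split; [lra|split; lra].
  have wp : 0 < w by rewrite lt0r wpos /=; lra.
  have h1 : C3 / w <= A3 by rewrite ler_pdivrMr //; nra.
  have h0 : 0 <= C3 / w by apply: divr_ge0; lra.
  split; [lra|split; [lra|]]. by rewrite opprB addrC subrK divfK.
case: hx => hx1 [hx2 hx3].
pose y := Q - r / x.
have hy : B4 <= y /\ y <= Q /\ x * (Q - y) = r.
  rewrite /y; have [x0|xpos] := eqVneq x 0.
    have -> : r = 0 by rewrite x0 in hx1; nra.
    rewrite x0 !mul0r subr0; split; [lra|split; lra].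
  have xp : 0 < x by rewrite lt0r xpos /=; lra.
  have h1 : r / x <= q1 by rewrite ler_pdivrMr //; nra.
  have h0 : 0 <= r / x by apply: divr_ge0; lra.
  split; [lra|split; [lra|]]. by rewrite opprB addrC subrK mulrC divfK.
case: hy => hy1 [hy2 hy3].
exists x, y, 0, w; split; try (apply/andP; split); try lra.
split => //; by rewrite mul0r.
Qed.

Lemma solC3 (P Q P2 Q2 r C3 C4 p1 q1 p2 q2 A3 B3 A4 B4 : R) :
 0<=p1 -> 0<=q1 -> 0<=p2 -> 0<=q2 -> 0<=A3 -> 0<=B3 -> 0<=A4 -> 0<=B4 -> 0<=r -> C3 = 0 -> 0<=C4 ->
 p1+A3 <= P -> q1+B4 <= Q -> p2+A4 <= P2 -> q2+B3 <= Q2 ->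
 r <= p1*q1 -> r <= p2*q2 -> C4 <= A4*B4 ->
 exists x y z w, sol P Q P2 Q2 r C3 C4 x y z w.
Proof.
move=> hp1 hq1 hp2 hq2 hA3 hB3 hA4 hB4 hr -> hC4 e1 e2 e3 e4 i1 i2 i4.
pose y := Q - r / P.
have hy : B4 <= y /\ y <= Q /\ P * (Q - y) = r.
  rewrite /y; have [P0|Ppos] := eqVneq P 0.
    have -> : r = 0 by rewrite P0 in e1; nra.
    rewrite P0 !mul0r subr0; split; [lra|split; lra].
  have Pp : 0 < P by rewrite lt0r Ppos /=; lra.
  have h1 : r / P <= q1 by rewrite ler_pdivrMr //; nra.
  have h0 : 0 <= r / P by apply: divr_ge0; lra.
  split; [lra|split; [lra|]]. by rewrite opprB addrC subrK mulrC divfK.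
case: hy => hy1 [hy2 hy3].
pose z := C4 / y.
have hz : 0 <= z /\ z <= A4 /\ z * y = C4.
  rewrite /z; have [y0|ypos] := eqVneq y 0.
    have -> : C4 = 0 by rewrite y0 in hy1; nra.
    rewrite y0 !mul0r; split; [lra|split; lra].
  have yp : 0 < y by rewrite lt0r ypos /=; lra.
  have h1 : C4 / y <= A4 by rewrite ler_pdivrMr //; nra.
  have h0 : 0 <= C4 / y by apply: divr_ge0; lra.
  split; [lra|split; [lra|]]. by rewrite divfK.
case: hz => hz1 [hz2 hz3].
pose w := Q2 - r / (P2 - z).
have hw : 0 <= w /\ w <= Q2 /\ (P2 - z) * (Q2 - w) = r.
  rewrite /w; have [P20|P2pos] := eqVneq (P2 - z) 0.
    have -> : r = 0 by nra.
    rewrite P20 !mul0r subr0; split; [lra|split; lra].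
  have P2p : 0 < P2 - z by rewrite lt0r P2pos /=; lra.
  have h1 : r / (P2 - z) <= q2 by rewrite ler_pdivrMr //; nra.
  have h0 : 0 <= r / (P2 - z) by apply: divr_ge0; lra.
  split; [lra|split; [lra|]].
  have -> : Q2 - (Q2 - r / (P2 - z)) = r / (P2 - z) by ring.
  by rewrite mulrC divfK.
case: hw => hw1 [hw2 hw3].
exists P, y, z, w; split; try (apply/andP; split); try lra.
split => //; by rewrite subrr mul0r.
Qed.

Lemma solr0 (P Q P2 Q2 r C3 C4 p1 q1 p2 q2 A3 B3 A4 B4 : R) :
 0<=p1 -> 0<=q1 -> 0<=p2 -> 0<=q2 -> 0<=A3 -> 0<=B3 -> 0<=A4 -> 0<=B4 -> r = 0 -> 0 <= C3 -> 0<=C4 ->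
 p1+A3 <= P -> q1+B4 <= Q -> p2+A4 <= P2 -> q2+B3 <= Q2 ->
 C3 <= A3*B3 -> C4 <= A4*B4 ->
 exists x y z w, sol P Q P2 Q2 r C3 C4 x y z w.
Proof.
move=> hp1 hq1 hp2 hq2 hA3 hB3 hA4 hB4 -> hC3 hC4 e1 e2 e3 e4 i3 i4.
pose y := C4 / P2.
have hy : 0 <= y /\ y <= B4 /\ P2 * y = C4.
  rewrite /y; have [P0|Ppos] := eqVneq P2 0.
    have -> : C4 = 0 by rewrite P0 in e3; nra.
    rewrite P0 !mul0r; split; [lra|split; lra].
  have Pp : 0 < P2 by rewrite lt0r Ppos /=; lra.
  have h1 : C4 / P2 <= B4 by rewrite ler_pdivrMr //; nra.
  have h0 : 0 <= C4 / P2 by apply: divr_ge0; lra.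
  split; [lra|split; [lra|]]. by rewrite mulrC divfK.
case: hy => hy1 [hy2 hy3].
pose w := C3 / P.
have hw : 0 <= w /\ w <= B3 /\ P * w = C3.
  rewrite /w; have [P0|Ppos] := eqVneq P 0.
    have -> : C3 = 0 by rewrite P0 in e1; nra.
    rewrite P0 !mul0r; split; [lra|split; lra].
  have Pp : 0 < P by rewrite lt0r Ppos /=; lra.
  have h1 : C3 / P <= B3 by rewrite ler_pdivrMr //; nra.
  have h0 : 0 <= C3 / P by apply: divr_ge0; lra.
  split; [lra|split; [lra|]]. by rewrite mulrC divfK.
case: hw => hw1 [hw2 hw3].
exists 0, y, P2, w; split; try (apply/andP; split); try lra.
split; rewrite ?mul0r ?subr0 ?subrr ?mul0r //.
Qed.

Lemma solgen (P Q P2 Q2 r C3 C4 p1 q1 p2 q2 A3 B3 A4 B4 : R) :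
 0<=p1 -> 0<=q1 -> 0<=p2 -> 0<=q2 -> 0<=A3 -> 0<=B3 -> 0<=A4 -> 0<=B4 -> 0<r -> 0<C3 -> 0<C4 ->
 p1+A3 <= P -> q1+B4 <= Q -> p2+A4 <= P2 -> q2+B3 <= Q2 ->
 r <= p1*q1 -> r <= p2*q2 -> C3 <= A3*B3 -> C4 <= A4*B4 ->
 exists x y z w, sol P Q P2 Q2 r C3 C4 x y z w.
Proof.
move=> hp1 hq1 hp2 hq2 hA3 hB3 hA4 hB4 hr hC3 hC4 e1 e2 e3 e4 i1 i2 i3 i4.
have p1p : 0 < p1 by nra.
have q1p : 0 < q1 by nra.
have A3p : 0 < A3 by nra.
have A4p : 0 < A4 by nra.
have B4p : 0 < B4 by nra.
have P2p : 0 < P2 by lra.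
pose h : {poly R} := (P2%:P * 'X - C4%:P) *
   (Q2%:P * (P%:P * (Q%:P - 'X) - r%:P) - C3%:P * (Q%:P - 'X))
   - r%:P * 'X * (P%:P * (Q%:P - 'X) - r%:P).
have hE : forall t, h.[t] = (P2 * t - C4) * (Q2 * (P * (Q - t) - r) - C3 * (Q - t))
   - r * t * (P * (Q - t) - r).
  by move=> t; rewrite /h !hornerE.
pose y0 := C4 / P2.
have y0p : 0 < y0 by apply: divr_gt0.
have y0B : y0 <= B4 by rewrite ler_pdivrMr //; nra.
have Py0 : P2 * y0 = C4 by rewrite mulrC divfK //; lra.
have hy0 : h.[y0] <= 0.
  rewrite hE Py0 subrr mul0r sub0r oppr_le0.
  have : r <= P * (Q - y0) by nra.
  move=> H; apply: mulr_ge0; [apply: mulr_ge0|]; lra.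
have hB : 0 <= h.[B4].
  rewrite hE.
  set u := Q - B4.
  have uq : q1 <= u by rewrite /u; lra.
  have D1 : A3 * u + r <= P * u by nra.
  have f1 : p2 * B4 <= P2 * B4 - C4.
    have : 0 <= (P2 - p2 - A4) * B4 by apply: mulr_ge0; lra.
    nra.
  have f4 : 0 <= P * u - r by nra.
  have f2 : C3 * u <= B3 * (P * u - r).
    have : 0 <= (P * u - r - A3 * u) * B3 by apply: mulr_ge0; lra.
    have : C3 * u <= A3 * B3 * u by apply: ler_wpM2r; lra.
    nra.
  have f3 : q2 * (P * u - r) <= Q2 * (P * u - r) - C3 * u.
    have : 0 <= (Q2 - q2 - B3) * (P * u - r) by apply: mulr_ge0; lra.
    nra.
  have : p2 * B4 * (q2 * (P * u - r)) <= (P2 * B4 - C4) * (Q2 * (P * u - r) - C3 * u).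
    apply: ler_pM => //; nra.
  have : 0 <= (p2 * q2 - r) * (B4 * (P * u - r)) by apply: mulr_ge0; nra.
  nra.
have [y /andP [yl yu] hy] : exists2 y, y0 <= y <= B4 & root h y.
  by apply: poly_ivt => //; rewrite hy0 hB.
move/rootP: hy; rewrite hE => hy.
have yp : 0 < y by lra.
have Qy : q1 <= Q - y by lra.
have Dp : 0 < P * (Q - y) - r by nra.
have Qyp : 0 < Q - y by lra.
pose x := r / (Q - y).
pose z := C4 / y.
pose w := C3 * (Q - y) / (P * (Q - y) - r).
have Dn : P * (Q - y) - r != 0 by rewrite gt_eqF.
have Qn : Q - y != 0 by rewrite gt_eqF.
have yn : y != 0 by rewrite gt_eqF.
have ex : x * (Q - y) = r by rewrite /x divfK.
have ez : z * y = C4 by rewrite /z divfK.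
have ew : (P - x) * w = C3.
  by rewrite /w /x; field; apply/andP; split.
have e5 : (P2 - z) * (Q2 - w) = r.
  have : (P2 - z) * (Q2 - w) * (y * (P * (Q - y) - r)) = r * (y * (P * (Q - y) - r)).
    have E1 : (P2 - z) * (Q2 - w) * (y * (P * (Q - y) - r)) =
       (P2 * y - C4) * (Q2 * (P * (Q - y) - r) - C3 * (Q - y)).
      by rewrite /z /w; field; rewrite Dn yn.
    rewrite E1; move/eqP: hy; rewrite subr_eq0 => /eqP ->; ring.
  move/mulIf; apply; rewrite mulf_neq0 //.
clear hy hE hy0 hB h.
have x0 : 0 <= x by apply: divr_ge0; lra.
have xP : x <= P by rewrite /x ler_pdivrMr //; lra.
have z0 : 0 <= z by apply: divr_ge0; lra.
have zP : z <= P2.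
  rewrite /z ler_pdivrMr //.
  have : 0 <= (y - y0) * P2 by apply: mulr_ge0; lra.
  rewrite mulrBl [y0 * P2]mulrC Py0; lra.
have w0 : 0 <= w by apply: divr_ge0; [apply: mulr_ge0|]; lra.
have wQ : w <= Q2.
  rewrite leNgt; apply/negP => H.
  have : (P2 - z) * (Q2 - w) <= 0 by apply: mulr_ge0_le0; lra.
  lra.
have y1 : 0 <= y by lra.
have y2 : y <= Q by lra.
exists x, y, z, w; split; try (by apply/andP; split).
by split.
Qed.

Lemma solve (P Q P2 Q2 r C3 C4 p1 q1 p2 q2 A3 B3 A4 B4 : R) :
 0<=p1 -> 0<=q1 -> 0<=p2 -> 0<=q2 -> 0<=A3 -> 0<=B3 -> 0<=A4 -> 0<=B4 -> 0<=r -> 0<=C3 -> 0<=C4 ->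
 p1+A3 <= P -> q1+B4 <= Q -> p2+A4 <= P2 -> q2+B3 <= Q2 ->
 r <= p1*q1 -> r <= p2*q2 -> C3 <= A3*B3 -> C4 <= A4*B4 ->
 exists x y z w, sol P Q P2 Q2 r C3 C4 x y z w.
Proof.
move=> hp1 hq1 hp2 hq2 hA3 hB3 hA4 hB4 hr hC3 hC4 e1 e2 e3 e4 i1 i2 i3 i4.
have [C40|C4n] := eqVneq C4 0; first by apply: (@solC4 _ _ _ _ _ _ _ p1 q1 p2 q2 A3 B3 A4 B4).
have [C30|C3n] := eqVneq C3 0; first by apply: (@solC3 _ _ _ _ _ _ _ p1 q1 p2 q2 A3 B3 A4 B4).
have [r0|rn] := eqVneq r 0; first by apply: (@solr0 _ _ _ _ _ _ _ p1 q1 p2 q2 A3 B3 A4 B4).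
apply: (@solgen _ _ _ _ _ _ _ p1 q1 p2 q2 A3 B3 A4 B4) => //; rewrite lt0r; apply/andP; split => //.
Qed.

End Alg.

Section Mat.
Variable R : realType.
Definition n2 (z : R[i]) : R := complex.Re z ^+ 2 + complex.Im z ^+ 2.

Lemma n2_ge0 z : 0 <= n2 z.
Proof. rewrite /n2; nra. Qed.

Lemma mulJ z : z * (z^*)%C = (n2 z)%:C%C.
Proof. case: z => a b; rewrite /n2 /=; simpc; congr (_ +i* _)%C; ring. Qed.

Lemma normn2 z : `|z| ^+ 2 = (n2 z)%:C%C.
Proof. by rewrite -add_Re2_Im2. Qed.

Lemma n2M u v : n2 (u * v) = n2 u * n2 v.
Proof. case: u => a b; case: v => c d; rewrite /n2 /=; ring. Qed.

Lemma n2J u : n2 (u^*)%C = n2 u.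
Proof. case: u => a b; rewrite /n2 /=; ring. Qed.

Lemma n2C (a : R) : n2 a%:C%C = a ^+ 2.
Proof. rewrite /n2 /=; ring. Qed.

Lemma n2_eq0 z : n2 z = 0 -> z = 0.
Proof.
case: z => a b; rewrite /n2 /= => h.
have a0 : a = 0 by apply/eqP; rewrite -sqrf_eq0; apply/eqP; nra.
have b0 : b = 0 by apply/eqP; rewrite -sqrf_eq0; apply/eqP; nra.
by rewrite a0 b0.
Qed.

Lemma rank1 (x e : R) (s : R[i]) : 0 <= x -> 0 <= e -> n2 s = x * e ->
  exists (a : R) (b : R[i]), [/\ 0 <= a, a ^+ 2 = x, n2 b = e & (a%:C)%C * (b^*)%C = s].
Proof.
move=> hx he hs.
have [x0|xn] := eqVneq x 0.
  exists 0, (Num.sqrt e)%:C%C; split => //; first by rewrite x0 expr2 mul0r.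
    by rewrite n2C sqr_sqrtr.
  by rewrite mul0r; apply/esym/n2_eq0; rewrite hs x0 mul0r.
have xp : 0 < x by rewrite lt0r xn.
set a := Num.sqrt x.
have ap : 0 < a by rewrite sqrtr_gt0.
have a2 : a ^+ 2 = x by rewrite sqr_sqrtr.
exists a, ((s^*)%C * (a^-1)%:C%C); split => //; first by apply: ltW.
  rewrite n2M n2J n2C hs exprVn a2; field; by rewrite xn.
have -> : ((s^*)%C * (a^-1)%:C%C)^*%C = s * (a^-1)%:C%C.
  by case: (s) => u v /=; simpc.
rewrite mulrCA -rmorphM divff ?mulr1 //.
by rewrite gt_eqF.
Qed.

Lemma cs_step (S t : R[i]) (A B nu nv : R) : 0 <= A -> 0 <= B -> 0 <= nu -> 0 <= nv ->
  n2 S <= A * B -> n2 t = nu * nv -> n2 (t + S) <= (nu + A) * (nv + B).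
Proof.
move=> hA hB hu hv hS ht.
have e : n2 (t + S) = n2 t + n2 S + 2 * (complex.Re S * complex.Re t + complex.Im S * complex.Im t).
  case: S {hS} => a b; case: t {ht} => c d; rewrite /n2 /=; ring.
rewrite e ht.
set X := complex.Re S * complex.Re t + complex.Im S * complex.Im t.
have hX : X ^+ 2 <= n2 S * n2 t.
  rewrite /X /n2; set a := complex.Re S; set b := complex.Im S; set c := complex.Re t; set d := complex.Im t.
  have : 0 <= (a * d - b * c) ^+ 2 by apply: sqr_ge0.
  move=> h; nra.
have h1 : n2 S * n2 t <= A * B * (nu * nv).
  rewrite ht; apply: ler_wpM2r; [by apply: mulr_ge0|done].
have h2 : 4 * (A * B * (nu * nv)) <= (A * nv + B * nu) ^+ 2.
  have : 0 <= (A * nv - B * nu) ^+ 2 by apply: sqr_ge0.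
  move=> h; nra.
have W0 : 0 <= A * nv + B * nu by apply: addr_ge0; apply: mulr_ge0.
have h3 : 2 * X <= A * nv + B * nu.
  have h4 : (2 * X) ^+ 2 <= (A * nv + B * nu) ^+ 2 by nra.
  nra.
nra.
Qed.

Lemma cs (T : Type) (s : seq T) (F : pred T) (u v : T -> R[i]) :
  n2 (\sum_(t <- s | F t) u t * (v t)^*)%C <=
  (\sum_(t <- s | F t) n2 (u t)) * (\sum_(t <- s | F t) n2 (v t)).
Proof.
elim: s => [|t s IH]; first by rewrite !big_nil mulr0 /n2 /= expr2 mulr0 addr0.
rewrite !big_cons; case: (F t) => //.
apply: cs_step => //; try apply: sumr_ge0 => i _; try apply: n2_ge0.
by rewrite n2M n2J.
Qed.
Lemma rcD (a b : R) : (a + b)%:C%C = a%:C%C + b%:C%C :> R[i].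
Proof. by apply/eqP; rewrite eq_complex /= addr0 !eqxx. Qed.
Lemma rc_sum (T : Type) (s : seq T) (P : pred T) (f : T -> R) :
  (\sum_(t <- s | P t) f t)%:C%C = \sum_(t <- s | P t) (f t)%:C%C :> R[i].
Proof.
elim: s => [|t s IH]; first by rewrite !big_nil; apply/eqP; rewrite eq_complex /= !eqxx.
by rewrite !big_cons; case: (P t); rewrite ?rcD IH. Qed.
Definition i0 : 'I_2 := @Ordinal 2 0 isT.
Definition i1 : 'I_2 := @Ordinal 2 1 isT.
Lemma ord2 (i : 'I_2) : i = i0 \/ i = i1.
Proof. case: i => [[|[|//]] Hi]; [left|right]; exact: val_inj. Qed.
Lemma i01 : (i0 == i1) = false. Proof. by []. Qed.
Lemma i10 : (i1 == i0) = false. Proof. by []. Qed.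
Lemma big_ord2 (V : nmodType) (F : 'I_2 -> V) : \sum_(i < 2) F i = F i0 + F i1.
Proof. by rewrite big_ord_recl big_ord1; congr (F _ + F _); apply: val_inj. Qed.

Lemma kraus_col (K : 'M[R[i]]_2) j : incoherent_kraus K -> K i0 j * (K i1 j)^*%C = 0.
Proof.
move=> HK.
pose d := fun i : 'I_2 => (if i == j then 1 else 0) : R[i].
have Hd : incoherent_state (\matrix_(i, k) (if i == k then d i else 0)).
  exists d; split => //.
    by move=> i; rewrite /d; case: ifP => _; [exact: ler01|].
  by rewrite big_ord2 /d; case: (ord2 j) => ->; rewrite eqxx ?i01 ?i10 ?addr0 ?add0r.
have := HK _ Hd; rewrite /=.
set s := K *m _ *m adj_mx K.
have sE : forall a b, s a b = K a j * (K b j)^*%C.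
  move=> a b; rewrite /s /adj_mx !mxE !big_ord2 !mxE !big_ord2 !mxE /d.
  by case: (ord2 j) => ->; rewrite eqxx ?i01 ?i10; ring.
have trE : \tr s = (n2 (K i0 j) + n2 (K i1 j))%:C%C.
  by rewrite /mxtrace big_ord2 !sE !mulJ rcD.
have [t0|tn] := eqVneq (\tr s) 0.
  move: t0; rewrite trE => /complexI h.
  have : n2 (K i0 j) = 0.
    by apply/le_anti; rewrite n2_ge0 andbT -h lerDl n2_ge0.
  by move/n2_eq0 => ->; rewrite mul0r.
move/(_ isT) => [d' [_ _ E]].
have h : ((\tr s)^-1 *: s) i0 i1 = 0 by rewrite E mxE i01.
move: h; rewrite mxE sE => /eqP; rewrite mulf_eq0 invr_eq0 (negPf tn) /=.
by move/eqP.
Qed.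

Arguments conjc {R} x : simpl never.
Arguments real_complex_def {F} phF x : simpl never.

Lemma conjM (u v : R[i]) : (u * v)^*%C = (u^*)%C * (v^*)%C.
Proof. case: u => a b; case: v => c d; rewrite /conjc /=; apply/eqP; rewrite eq_complex /=. by apply/andP; split; apply/eqP; ring. Qed.

Lemma conjD (u v : R[i]) : (u + v)^*%C = (u^*)%C + (v^*)%C.
Proof. case: u => a b; case: v => c d; rewrite /conjc /=; apply/eqP; rewrite eq_complex /=. by apply/andP; split; apply/eqP; ring. Qed.

Lemma conj_sum (T : Type) (s : seq T) (P : pred T) (f : T -> R[i]) :
  (\sum_(t <- s | P t) f t)^*%C = \sum_(t <- s | P t) (f t)^*%C.
Proof.
elim: s => [|t s IH]; first by rewrite !big_nil conjc0.
by rewrite !big_cons; case: (P t); rewrite ?conjD IH.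
Qed.

Definition T (Ks : seq 'M[R[i]]_2) i j k l := \sum_(K <- Ks) K i k * (K j l)^*%C.

Lemma Tsym Ks i j k l : T Ks j i l k = (T Ks i j k l)^*%C.
Proof. by rewrite /T conj_sum; apply: eq_bigr => K _; rewrite conjM conjcK mulrC. Qed.

Lemma Phi_entry Ks (rho : 'M[R[i]]_2) i j :
  (\sum_(K <- Ks) K *m rho *m adj_mx K) i j = \sum_k \sum_l rho k l * T Ks i j k l.
Proof.
rewrite summxE.
transitivity (\sum_(K <- Ks) \sum_k \sum_l rho k l * (K i k * (K j l)^*%C)).
  apply: eq_bigr => K _; rewrite mxE exchange_big /=; apply: eq_bigr => l _.
  rewrite !mxE mulr_suml; apply: eq_bigr => k _; ring.
rewrite exchange_big; apply: eq_bigr => k _; rewrite exchange_big; apply: eq_bigr => l _.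
by rewrite /T mulr_sumr.
Qed.

Lemma TP_entry Ks k l :
  (\sum_(K <- Ks) adj_mx K *m K) k l = T Ks i0 i0 l k + T Ks i1 i1 l k.
Proof.
rewrite summxE /T -big_split /=; apply: eq_bigr => K _.
rewrite mxE big_ord2 !mxE; ring.
Qed.

Lemma Teq Ks Ks' :
  (forall i j k l, ((i == i0) && (j == i0)) || ((i == i1) && (j == i1)) || ((i == i0) && (j == i1)) ->
     T Ks' i j k l = T Ks i j k l) ->
  forall i j k l, T Ks' i j k l = T Ks i j k l.
Proof.
move=> H i j k l.
case: (ord2 i) => ->; case: (ord2 j) => ->; try (by apply: H);
  by rewrite Tsym [RHS]Tsym H.
Qed.
End Mat.


Arguments n2 {R}. Arguments T {R}.  Arguments sol {R}.
Arguments solve {R}. Arguments rank1 {R}. Arguments cs {R}. Arguments kraus_col {R}.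
Arguments Tsym {R}. Arguments Phi_entry {R}. Arguments TP_entry {R}. Arguments Teq {R}.
Arguments mulJ {R}. Arguments normn2 {R}. Arguments n2_ge0 {R}. Arguments n2J {R}. Arguments n2C {R}.
Arguments rcD {R}. Arguments rc_sum {R}. Arguments conjM {R}. Arguments conjD {R}.
Arguments conjc {R} x : simpl never.
Arguments real_complex_def {F} phF x : simpl never.
Section Main.
Variable R : realType.

Lemma restrict (Ks : seq 'M[R[i]]_2) (F : pred 'M[R[i]]_2) (g : 'M[R[i]]_2 -> R[i]) :
  (forall K, K \in Ks -> ~~ F K -> g K = 0) ->
  \sum_(K <- Ks) g K = \sum_(K <- Ks | F K) g K.
Proof.
move=> H; rewrite [RHS]big_mkcond /=; apply: eq_big_seq => K HK.
by case: ifP => // /negbT /(H _ HK).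
Qed.

Lemma sum_disj (Ks : seq 'M[R[i]]_2) (F G : pred 'M[R[i]]_2) (f : 'M[R[i]]_2 -> R) :
  (forall K, F K -> G K -> False) -> (forall K, 0 <= f K) ->
  \sum_(K <- Ks | F K) f K + \sum_(K <- Ks | G K) f K <= \sum_(K <- Ks) f K.
Proof.
move=> D P0; rewrite (big_mkcond F) (big_mkcond G) -big_split /=; apply: ler_sum => K _.
case: (boolP (F K)) => hF; case: (boolP (G K)) => hG.
- by case: (D _ hF hG).
- by rewrite addr0.
- by rewrite add0r.
- by rewrite addr0.
Qed.

Lemma n2N (z : R[i]) : n2 (- z) = n2 z.
Proof. by case: z => a b; rewrite /n2 /=; ring. Qed.

Lemma rcM (a b : R) : (a * b)%:C%C = a%:C%C * b%:C%C :> R[i].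
Proof. by apply/eqP; rewrite eq_complex /= !mulr0 !mul0r subr0 addr0 !eqxx. Qed.


End Main.
Arguments restrict {R}. Arguments sum_disj {R}. Arguments n2N {R}. Arguments rcM {R}.

Theorem proposition1 (R : realType) (Phi : 'M[R[i]]_2 -> 'M[R[i]]_2) :
  incoherent_operation Phi ->
  exists (a1 a2 a3 a4 : R) (b1 b2 b3 b4 : R[i]),
    [/\ a1 ^+ 2 + a2 ^+ 2 + a3 ^+ 2 + a4 ^+ 2 = 1,
        `|b1| ^+ 2 + `|b2| ^+ 2 + `|b3| ^+ 2 + `|b4| ^+ 2 = 1,
        (a1%:C)%C * b1 + (a2%:C)%C * b2 = 0 &
        forall rho : 'M[R[i]]_2,
          Phi rho = K1 a1 b1 *m rho *m adj_mx (K1 a1 b1)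
                  + K2 a2 b2 *m rho *m adj_mx (K2 a2 b2)
                  + K3 a3 b3 *m rho *m adj_mx (K3 a3 b3)
                  + K4 a4 b4 *m rho *m adj_mx (K4 a4 b4)].
Proof.
move=> [Ks [HK Htp HPhi]].
have col : forall K, K \in Ks -> forall j, K i0 j = 0 \/ K i1 j = 0.
  move=> K hK j; have := kraus_col K j (HK K hK); move/eqP; rewrite mulf_eq0 conjc_eq0.
  by case/orP => /eqP ->; [left|right].
pose P := \sum_(K <- Ks) n2 (K i0 i0).
pose Q := \sum_(K <- Ks) n2 (K i0 i1).
pose P2 := \sum_(K <- Ks) n2 (K i1 i0).
pose Q2 := \sum_(K <- Ks) n2 (K i1 i1).
have TPk : forall k l, T Ks i0 i0 l k + T Ks i1 i1 l k = (1%:M : 'M[R[i]]_2) k l.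
  by move=> k l; rewrite -TP_entry Htp.
have Tdiag : forall i k, T Ks i i k k = (\sum_(K <- Ks) n2 (K i k))%:C%C.
  by move=> i k; rewrite /T rc_sum; apply: eq_bigr => K _; rewrite mulJ.
have PP : P + P2 = 1.
  have := TPk i0 i0; rewrite !Tdiag -rcD mxE eqxx /= => h.
  by apply: (@complexI R); rewrite h.
have QQ : Q + Q2 = 1.
  have := TPk i1 i1; rewrite !Tdiag -rcD mxE eqxx /= => h.
  by apply: (@complexI R); rewrite h.
have ss : T Ks i0 i0 i0 i1 + T Ks i1 i1 i0 i1 = 0.
  by rewrite TPk mxE i10.
pose F1 := fun K : 'M[R[i]]_2 => (K i1 i0 == 0) && (K i1 i1 == 0).
pose F2 := fun K : 'M[R[i]]_2 => (K i0 i0 == 0) && (K i0 i1 == 0).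
pose F3 := fun K : 'M[R[i]]_2 => (K i0 i0 != 0) && (K i1 i1 != 0).
pose F4 := fun K : 'M[R[i]]_2 => (K i0 i1 != 0) && (K i1 i0 != 0).
pose p1 := \sum_(K <- Ks | F1 K) n2 (K i0 i0).
pose q1 := \sum_(K <- Ks | F1 K) n2 (K i0 i1).
pose p2 := \sum_(K <- Ks | F2 K) n2 (K i1 i0).
pose q2 := \sum_(K <- Ks | F2 K) n2 (K i1 i1).
pose A3 := \sum_(K <- Ks | F3 K) n2 (K i0 i0).
pose B3 := \sum_(K <- Ks | F3 K) n2 (K i1 i1).
pose A4 := \sum_(K <- Ks | F4 K) n2 (K i1 i0).
pose B4 := \sum_(K <- Ks | F4 K) n2 (K i0 i1).
pose s := T Ks i0 i0 i0 i1.
pose s2 := T Ks i1 i1 i0 i1.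
pose c3 := T Ks i0 i1 i0 i1.
pose c4 := T Ks i0 i1 i1 i0.
have hs : n2 s <= p1 * q1.
  rewrite /s /T (@restrict R Ks F1); first exact: cs.
  move=> K hK /=; rewrite negb_and => /orP [h|h].
    by case: (col K hK i0) => e; [rewrite e mul0r | rewrite e eqxx in h].
  by case: (col K hK i1) => e; [rewrite e conjc0 mulr0 | rewrite e eqxx in h].
have hs2 : n2 s2 <= p2 * q2.
  rewrite /s2 /T (@restrict R Ks F2); first exact: cs.
  move=> K hK /=; rewrite negb_and => /orP [h|h].
    by case: (col K hK i0) => e; [rewrite e eqxx in h | rewrite e mul0r].
  by case: (col K hK i1) => e; [rewrite e eqxx in h | rewrite e conjc0 mulr0].
have hc3 : n2 c3 <= A3 * B3.
  rewrite /c3 /T (@restrict R Ks F3); first exact: cs.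
  move=> K hK /=; rewrite negb_and !negbK => /orP [/eqP e|/eqP e].
    by rewrite e mul0r.
  by rewrite e conjc0 mulr0.
have hc4 : n2 c4 <= A4 * B4.
  rewrite mulrC /c4 /T (@restrict R Ks F4); first exact: cs.
  move=> K hK /=; rewrite negb_and !negbK => /orP [/eqP e|/eqP e].
    by rewrite e mul0r.
  by rewrite e conjc0 mulr0.
have d1 : p1 + A3 <= P.
  apply: sum_disj => [K /andP[_ /eqP e] /andP[_]|K]; [by rewrite e eqxx | exact: n2_ge0].
have d2 : q1 + B4 <= Q.
  apply: sum_disj => [K /andP[/eqP e _] /andP[_]|K]; [by rewrite e eqxx | exact: n2_ge0].
have d3 : p2 + A4 <= P2.
  apply: sum_disj => [K /andP[_ /eqP e] /andP[]|K]; [by rewrite e eqxx | exact: n2_ge0].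
have d4 : q2 + B3 <= Q2.
  apply: sum_disj => [K /andP[/eqP e _] /andP[]|K]; [by rewrite e eqxx | exact: n2_ge0].
have ns2 : n2 s2 = n2 s.
  have -> : s2 = - s by apply/eqP; rewrite -addr_eq0 addrC; apply/eqP; exact: ss.
  by rewrite n2N.
have g0 : forall (F : pred 'M[R[i]]_2) (a b : 'I_2), 0 <= \sum_(K <- Ks | F K) n2 (K a b).
  by move=> F a b; apply: sumr_ge0 => K _; apply: n2_ge0.
have hs2' : n2 s <= p2 * q2 by rewrite -ns2.
have [x [y [z [w [/andP[x0 xP] /andP[y0 yQ] /andP[z0 zP] /andP[w0 wQ] [e1 e2 e3 e4]]]]]] :=
  solve P Q P2 Q2 (n2 s) (n2 c3) (n2 c4) p1 q1 p2 q2 A3 B3 A4 B4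
    (g0 _ _ _) (g0 _ _ _) (g0 _ _ _) (g0 _ _ _) (g0 _ _ _) (g0 _ _ _) (g0 _ _ _) (g0 _ _ _)
    (n2_ge0 _) (n2_ge0 _) (n2_ge0 _) d1 d2 d3 d4 hs hs2' hc3 hc4.
have [a1 [b1 [_ ha1 hb1 hab1]]] := rank1 x (Q - y) s x0 ltac:(rewrite subr_ge0 //) (esym e1).
have [a3 [b3 [_ ha3 hb3 hab3]]] := rank1 (P - x) w c3 ltac:(rewrite subr_ge0 //) w0 (esym e2).
have [a2 [b2 [_ ha2 hb2 hab2]]] := rank1 (P2 - z) (Q2 - w) s2
  ltac:(rewrite subr_ge0 //) ltac:(rewrite subr_ge0 //) ltac:(by rewrite ns2 e4).
have [a4 [b4 [_ ha4 hb4 hab4]]] := rank1 z y (c4^*)%C z0 y0 ltac:(by rewrite n2J -e3).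
have hab4' : b4 * a4%:C%C = c4.
  by have := congr1 (@conjc R) hab4; rewrite conjM !conjcK conjc_real mulrC.
exists a1, a2, a3, a4, b1, b2, b3, b4; split.
- rewrite ha1 ha2 ha3 ha4; lra.
- rewrite !normn2 -!rcD hb1 hb2 hb3 hb4.
  have -> : Q - y + (Q2 - w) + w + y = 1 by lra.
  by [].
- have h : a1%:C%C * (b1^*)%C + a2%:C%C * (b2^*)%C = 0 :> R[i] by rewrite hab1 hab2.
  by have := congr1 (@conjc R) h; rewrite conjD !conjM !conjcK !conjc_real => ->.
have hT0000 : T Ks i0 i0 i0 i0 = a1%:C%C * a1%:C%C + a3%:C%C * a3%:C%C.
  rewrite Tdiag; change (\sum_(K <- Ks) n2 (K i0 i0)) with P.
  have -> : P = a1 * a1 + a3 * a3 by rewrite -!expr2 ha1 ha3; ring.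
  by rewrite rcD !rcM.
have hT1100 : T Ks i1 i1 i0 i0 = a2%:C%C * a2%:C%C + a4%:C%C * a4%:C%C.
  rewrite Tdiag; change (\sum_(K <- Ks) n2 (K i1 i0)) with P2.
  have -> : P2 = a2 * a2 + a4 * a4 by rewrite -!expr2 ha2 ha4; ring.
  by rewrite rcD !rcM.
have hT0011 : T Ks i0 i0 i1 i1 = b1 * (b1^*)%C + b4 * (b4^*)%C.
  rewrite Tdiag; change (\sum_(K <- Ks) n2 (K i0 i1)) with Q.
  have -> : Q = n2 b1 + n2 b4 by rewrite hb1 hb4; ring.
  by rewrite rcD !mulJ.
have hT1111 : T Ks i1 i1 i1 i1 = b2 * (b2^*)%C + b3 * (b3^*)%C.
  rewrite Tdiag; change (\sum_(K <- Ks) n2 (K i1 i1)) with Q2.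
  have -> : Q2 = n2 b2 + n2 b3 by rewrite hb2 hb3; ring.
  by rewrite rcD !mulJ.
have hT0100 : T Ks i0 i1 i0 i0 = 0.
  rewrite /T big1_seq // => K /= hK.
  by case: (col K hK i0) => ->; rewrite ?mul0r ?conjc0 ?mulr0.
have hT0111 : T Ks i0 i1 i1 i1 = 0.
  rewrite /T big1_seq // => K /= hK.
  by case: (col K hK i1) => ->; rewrite ?mul0r ?conjc0 ?mulr0.
have hT0001 : T Ks i0 i0 i0 i1 = a1%:C%C * (b1^*)%C by rewrite hab1.
have hT1101 : T Ks i1 i1 i0 i1 = a2%:C%C * (b2^*)%C by rewrite hab2.
have hT0101 : T Ks i0 i1 i0 i1 = a3%:C%C * (b3^*)%C by rewrite hab3.
have hT0110 : T Ks i0 i1 i1 i0 = b4 * a4%:C%C by rewrite hab4'.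
have hT0010 : T Ks i0 i0 i1 i0 = b1 * a1%:C%C.
  by rewrite Tsym hT0001 conjM conjcK conjc_real mulrC.
have hT1110 : T Ks i1 i1 i1 i0 = b2 * a2%:C%C.
  by rewrite Tsym hT1101 conjM conjcK conjc_real mulrC.
move=> rho; rewrite HPhi.
set Ks' := [:: K1 a1 b1; K2 a2 b2; K3 a3 b3; K4 a4 b4].
have -> : K1 a1 b1 *m rho *m adj_mx (K1 a1 b1) + K2 a2 b2 *m rho *m adj_mx (K2 a2 b2)
   + K3 a3 b3 *m rho *m adj_mx (K3 a3 b3) + K4 a4 b4 *m rho *m adj_mx (K4 a4 b4)
   = \sum_(K <- Ks') K *m rho *m adj_mx K.
  by rewrite !big_cons big_nil addr0 !addrA.
apply/matrixP => i j; rewrite !Phi_entry; apply: eq_bigr => k _; apply: eq_bigr => l _.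
congr (_ * _); apply: esym; apply: Teq => {}i {}j {}k {}l H.
have -> : T Ks' i j k l = K1 a1 b1 i k * (K1 a1 b1 j l)^*%C + K2 a2 b2 i k * (K2 a2 b2 j l)^*%C
   + K3 a3 b3 i k * (K3 a3 b3 j l)^*%C + K4 a4 b4 i k * (K4 a4 b4 j l)^*%C.
  by rewrite /T !big_cons big_nil addr0 !addrA.
case: (ord2 i) H => ->; case: (ord2 j) => ->; rewrite ?eqxx ?i01 ?i10 //= => _;
  case: (ord2 k) => ->; case: (ord2 l) => ->; rewrite !mxE /=.
all: rewrite ?hT0000 ?hT0001 ?hT0010 ?hT0011 ?hT1100 ?hT1101 ?hT1110 ?hT1111
  ?hT0100 ?hT0101 ?hT0110 ?hT0111 ?conjc_real ?conjc0.
all: ring.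
Qed.
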